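(* Let $G$ be a finite simple graph without isolated vertices with $\gamma_t(G)=2$. Then $TDV(v)\le \deg(v)$ for every $v\in V(G)$.
   Context: A set $D \subseteq V(G)$ is a total dominating set of $G$ if every vertex of $G$ has a neighbor in $D$. $\gamma_t(G)$ is the minimum cardinality of a total dominating set; a minimum one is a $\gamma_t(G)$-set. $TDV(v)$ is the number of $\gamma_t(G)$-sets containing $v$. *)

(* Defs.v *)
From mathcomp Require Import all_boot.
Set Implicit Arguments. Unset Strict Implicit. Unset Printing Implicit Defensive.

Definition simple_graph (T : finType) (e : rel T) : Prop :=
  symmetric e /\ irreflexive e.

Definition nbhd (T : finType) (e : rel T) (v : T) : {set T} := [set u | e v u].
Definition deg (T : finType) (e : rel T) (v : T) : nat := #|nbhd e v|.

Definition no_isolated (T : finType) (e : rel T) : Prop :=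
  forall v : T, 0 < deg e v.

Definition is_tds (T : finType) (e : rel T) (D : {set T}) : bool :=
  [forall v, [exists u in D, e v u]].

(* total domination number: minimum cardinality of a TDS
   (the default value #|T| is irrelevant when a TDS exists) *)
Definition gamma_t (T : finType) (e : rel T) : nat :=
  \big[minn/#|T|]_(D : {set T} | is_tds e D) #|D|.

Definition is_gamma_t_set (T : finType) (e : rel T) (D : {set T}) : bool :=
  is_tds e D && (#|D| == gamma_t e).

Definition TDV (T : finType) (e : rel T) (v : T) : nat :=
  #|[set D : {set T} | is_gamma_t_set e D & v \in D]|.

(* Main.v *)
Require Import Defs.
From mathcomp Require Import all_boot.

Theorem lemma2p12 (T : finType) (e : rel T) :
  simple_graph e -> no_isolated e -> gamma_t e = 2 ->
  forall v : T, TDV e v <= deg e v.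
Proof.
move=> [Hsym Hirr] _ Hg v.
rewrite /TDV /deg.
apply: leq_trans (subset_leq_card _) (leq_imset_card (fun u => [set v; u]) _).
apply/subsetP => D; rewrite inE => /andP[/andP[Htds /eqP Hc] vD].
move/forallP: Htds => /(_ v) /existsP [u /andP[uD evu]].
apply/imsetP; exists u; first by rewrite inE.
have vu : v != u by apply/eqP => Evu; rewrite -Evu Hirr in evu.
apply/eqP; rewrite eq_sym eqEcard subUset !sub1set vD uD /= cards2 vu Hc Hg.
by [].
Qed.
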